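(* Let $\Sigma_0=(A_0,B_0,C_0,D;\mathcal X_0,\mathcal U,\mathcal Y;\kappa)$ and $\Sigma=(A,B,C,D;\mathcal X,\mathcal U,\mathcal Y;\kappa)$ be passive realizations of $\theta\in\mathbf S_\kappa(\mathcal U,\mathcal Y)$ (both with state spaces of negative index $\kappa$) such that $\Sigma_0$ is optimal. If for all $z,w$ in a sufficiently small symmetric neighbourhood $\Omega$ of the origin $$B^*(I-\bar wA^* )^{-1}(I-zA)^{-1}B=B_0^*(I-\bar wA_0^* )^{-1}(I-zA_0)^{-1}B_0,$$ then $\Sigma$ is optimal.
   Context: Standing conventions. All spaces are separable Pontryagin spaces; adjoints and contractivity are with respect to the indefinite inner products. $E_{\mathcal H}(h)=\langle h,h\rangle_{\mathcal H}$. A system $\Sigma=(A,B,C,D;\mathcal X,\mathcal U,\mathcal Y;\kappa)$: state space $\mathcal X$ with negative index $\kappa$, $\mathcal U,\mathcal Y$ with the same negative index, bounded $T_\Sigma=\begin{pmatrix}A&B\\C&D\end{pmatrix}:\mathcal X\oplus\mathcal U\to\mathcal X\oplus\mathcal Y$; passive if $T_\Sigma$ is a contraction ($\langle Tx,Tx\rangle\le\langle x,x\rangle$). Transfer function $D+zC(I-zA)^{-1}B$; realization of $\theta$ if equal to $\theta$ near $0$. $\mathbf S_\kappa(\mathcal U,\mathcal Y)$: $\mathcal L(\mathcal U,\mathcal Y)$-valued functions holomorphic near $0$ whose kernel $\frac{I-S(z)S(w)^*}{1-z\bar w}$ has exactly $\kappa$ negative squares. A passive realization of $\theta\in\mathbf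 S_\kappa(\mathcal U,\mathcal Y)$ is $\kappa$-admissible if its state space has negative index $\kappa$. Optimal: a $\kappa$-admissible passive realization $\Sigma$ of $\theta$ such that for every $\kappa$-admissible passive realization $\Sigma'=(A',B',C',D;\mathcal X',\mathcal U,\mathcal Y;\kappa)$ of $\theta$, $E_{\mathcal X}(\sum_{k=0}^nA^kBu_k)\le E_{\mathcal X'}(\sum_{k=0}^nA'^kB'u_k)$ for all $n\in\mathbb N_0$, $u_k\in\mathcal U$. *)

(* Defs.v *)
From HB Require Import structures.
From mathcomp Require Import all_boot all_order all_algebra.
From mathcomp Require Import reals.
From mathcomp Require Import complex.
From Stdlib Require Import ClassicalEpsilon.
Set Implicit Arguments. Unset Strict Implicit. Unset Printing Implicit Defensive.
Import Order.TTheory GRing.Theory Num.Theory.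
Local Open Scope ring_scope.
Local Open Scope complex_scope.

Section Pontryagin.
Variable R : realType.
Local Notation C := (R[i]).

(** squared norm induced by a fundamental decomposition: Pm is the projection
    onto the negative part X_-, id - Pm the projection onto X_+ *)
Definition jnsq (V : lmodType C) (ip : V -> V -> C) (Pm : V -> V) (x : V) : C :=
  ip (x - Pm x) (x - Pm x) - ip (Pm x) (Pm x).

Definition jcomplete (V : lmodType C) (ip : V -> V -> C) (Pm : V -> V) : Prop :=
  forall s : nat -> V,
    (forall eps : C, 0 < eps -> exists N, forall m n, (N <= m)%N -> (N <= n)%N ->
        jnsq ip Pm (s m - s n) < eps) ->
    exists x, forall eps : C, 0 < eps -> exists N, forall n, (N <= n)%N ->
        jnsq ip Pm (s n - x) < eps.

Definition jseparable (V : lmodType C) (ip : V -> V -> C) (Pm : V -> V) : Prop :=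
  exists d : nat -> V, forall x eps, 0 < eps -> exists n, jnsq ip Pm (x - d n) < eps.

(** A separable Pontryagin space with negative index [pkappa]: a complex vector
    space with a hermitian form and a fundamental decomposition
    X = X_+ [+] X_- (orthogonal), X_+ positive definite, X_- negative definite of
    dimension pkappa, complete (both parts are Hilbert spaces) and separable. *)
Record pspace := PSpace {
  pcar : lmodType C;
  pip : pcar -> pcar -> C;
  pPm : pcar -> pcar;
  pkappa : nat;
  pip_linl : forall a x y z, pip (a *: x + y) z = a * pip x z + pip y z;
  pip_herm : forall x y, pip x y = (pip y x)^*;
  pPm_lin : forall a x y, pPm (a *: x + y) = a *: pPm x + pPm y;
  pPm_idem : forall x, pPm (pPm x) = pPm x;
  pPm_orth : forall x y, pip (pPm x) (y - pPm y) = 0;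
  pneg_def : forall x, pPm x = x -> x != 0 -> pip x x < 0;
  ppos_def : forall x, pPm x = 0 -> x != 0 -> 0 < pip x x;
  pneg_dim : exists e : 'I_pkappa -> pcar,
      (forall l, pPm (e l) = e l) /\
      (forall x, pPm x = x -> exists a : 'I_pkappa -> C, x = \sum_l a l *: e l) /\
      (forall a : 'I_pkappa -> C, \sum_l a l *: e l = 0 -> forall l, a l = 0);
  pcomplete : jcomplete pip pPm;
  pseparable : jseparable pip pPm
}.
Coercion pcar : pspace >-> lmodType.

Definition energy (X : pspace) (x : X) : C := pip x x.
Definition pnsq (X : pspace) (x : X) : C := jnsq (@pip X) (@pPm X) x.

Definition is_linear (X Y : pspace) (f : X -> Y) : Prop :=
  forall a x y, f (a *: x + y) = a *: f x + f y.
Definition is_bounded (X Y : pspace) (f : X -> Y) : Prop :=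
  exists M : C, forall x, pnsq (f x) <= M * pnsq x.
Definition bounded_op (X Y : pspace) (f : X -> Y) : Prop :=
  is_linear f /\ is_bounded f.

Definition adj (X Y : pspace) (f : X -> Y) : Y -> X :=
  epsilon (inhabits (fun _ => 0))
    (fun g : Y -> X => forall x y, pip (f x) y = pip x (g y)).

Definition opinv (X : pspace) (f : X -> X) : X -> X :=
  epsilon (inhabits (fun x => x))
    (fun g : X -> X => (forall x, g (f x) = x) /\ (forall x, f (g x) = x)).

Definition IminusZ (X : pspace) (z : C) (T : X -> X) : X -> X :=
  fun x => x - z *: T x.

Definition transfer (X U Y : pspace) (A : X -> X) (B : U -> X) (Cc : X -> Y)
  (D : U -> Y) (z : C) : U -> Y :=
  fun u => D u + z *: Cc (opinv (IminusZ z A) (B u)).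

Definition is_system (X U Y : pspace) (A : X -> X) (B : U -> X) (Cc : X -> Y)
  (D : U -> Y) : Prop :=
  [/\ bounded_op A, bounded_op B, bounded_op Cc, bounded_op D &
      pkappa U = pkappa Y].

(** passive: T_Sigma : X (+) U -> X (+) Y is a contraction *)
Definition passive (X U Y : pspace) A B Cc D : Prop :=
  @is_system X U Y A B Cc D /\
  forall (x : X) (u : U),
    pip (A x + B u) (A x + B u) + pip (Cc x + D u) (Cc x + D u)
      <= pip x x + pip u u.

Definition realizes (X U Y : pspace) A B Cc D (theta : C -> U -> Y) : Prop :=
  exists r : C, 0 < r /\ forall z, `|z| < r -> forall u,
      theta z u = @transfer X U Y A B Cc D z u.

Definition kadmissible (X U Y : pspace) A B Cc D (kappa : nat)
  (theta : C -> U -> Y) : Prop :=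
  [/\ @passive X U Y A B Cc D, realizes A B Cc D theta & pkappa X = kappa].

Definition ctrl_sum (X U : pspace) (A : X -> X) (B : U -> X) (n : nat)
  (u : nat -> U) : X :=
  \sum_(k < n.+1) iter k A (B (u k)).

Definition optimal (X U Y : pspace) A B Cc D (kappa : nat)
  (theta : C -> U -> Y) : Prop :=
  @kadmissible X U Y A B Cc D kappa theta /\
  forall (X' : pspace) (A' : X' -> X') (B' : U -> X') (C' : X' -> Y),
    kadmissible A' B' C' D kappa theta ->
    forall (n : nat) (u : nat -> U),
      energy (ctrl_sum A B n u) <= energy (ctrl_sum A' B' n u).

(** Gram quadratic form of the kernel (I - theta(z) theta(w)^* ) / (1 - z conj w)
    at points z_1..z_n with vectors y_1..y_n:
    q(c) = sum_{i,j} <K(z_j,z_i) c_j y_j, c_i y_i>_Y *)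
Definition schur_gram (U Y : pspace) (theta : C -> U -> Y) (n : nat)
  (z : 'I_n -> C) (y : 'I_n -> Y) (i j : 'I_n) : C :=
  (pip (y j) (y i) - pip (adj (theta (z i)) (y j)) (adj (theta (z j)) (y i)))
    / (1 - z j * (z i)^*).

Definition gram_form (n : nat) (G : 'I_n -> 'I_n -> C) (c : 'I_n -> C) : C :=
  \sum_(i < n) \sum_(j < n) c j * (c i)^* * G i j.

(** the kernel has at least k negative squares on the disc |z| < r: some Gram
    form has a k-dimensional negative definite subspace *)
Definition negsq_ge (U Y : pspace) (theta : C -> U -> Y) (r : C) (k : nat) : Prop :=
  exists (n : nat) (z : 'I_n -> C) (y : 'I_n -> Y) (v : 'I_k -> 'I_n -> C),
    (forall i, `|z i| < r) /\
    forall a : 'I_k -> C, (exists l, a l != 0) ->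
      gram_form (schur_gram theta z y) (fun i => \sum_(l < k) a l * v l i) < 0.

Definition holo_on (U Y : pspace) (theta : C -> U -> Y) (r : C) : Prop :=
  (forall z, `|z| < r -> bounded_op (theta z)) /\
  forall z, `|z| < r -> exists T' : U -> Y,
    forall eps : C, 0 < eps -> exists del : C, 0 < del /\
      forall h, 0 < `|h| < del -> forall u,
        pnsq (h^-1 *: (theta (z + h) u - theta z u) - T' u) <= eps * pnsq u.

Definition in_Skappa (U Y : pspace) (kappa : nat) (theta : C -> U -> Y) : Prop :=
  exists r : C, [/\ 0 < r, r <= 1, holo_on theta r,
    negsq_ge theta r kappa & ~ negsq_ge theta r kappa.+1].

End Pontryagin.

(* Main.v *)
Require Import Defs.
From HB Require Import structures.
From mathcomp Require Import all_boot all_order all_algebra.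
From mathcomp Require Import reals.
From mathcomp Require Import complex.
From mathcomp Require Import ring lra.
From Stdlib Require Import ClassicalEpsilon.
Import Order.TTheory GRing.Theory Num.Theory.
Local Open Scope ring_scope.
Local Open Scope complex_scope.
Set Implicit Arguments. Unset Strict Implicit. Unset Printing Implicit Defensive.


Section Basics.
Variable R : realType.
Local Notation C := (R[i]).
Variable X : pspace R.

Local Notation ip := (@pip R X).
Local Notation P := (@pPm R X).

Lemma ipDl x y z : ip (x + y) z = ip x z + ip y z.
Proof. by have := pip_linl 1 x y z; rewrite scale1r mul1r. Qed.
Lemma ip0l z : ip 0 z = 0.
Proof. by have /eqP := ipDl 0 0 z; rewrite addr0 -subr_eq addrN eq_sym => /eqP. Qed.
Lemma ipZl a x z : ip (a *: x) z = a * ip x z.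
Proof. by have := pip_linl a x 0 z; rewrite addr0 ip0l addr0. Qed.
Lemma ipNl x z : ip (- x) z = - ip x z.
Proof. by rewrite -scaleN1r ipZl mulN1r. Qed.
Lemma ipBl x y z : ip (x - y) z = ip x z - ip y z.
Proof. by rewrite ipDl ipNl. Qed.
Lemma ipDr x y z : ip z (x + y) = ip z x + ip z y.
Proof. rewrite (pip_herm z (x+y)) (pip_herm z x) (pip_herm z y) ipDl; exact: rmorphD. Qed.
Lemma ipZr a x z : ip z (a *: x) = a^* * ip z x.
Proof. rewrite (pip_herm z) (pip_herm z x) ipZl; exact: rmorphM. Qed.
Lemma ip0r z : ip z 0 = 0.
Proof. by rewrite pip_herm ip0l conjc0. Qed.
Lemma ipNr x z : ip z (- x) = - ip z x.
Proof. by apply/eqP; rewrite -subr_eq0 opprK -ipDr addNr ip0r. Qed.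
Lemma ipBr x y z : ip z (x - y) = ip z x - ip z y.
Proof. by rewrite ipDr ipNr. Qed.
Lemma ip_suml I (r : seq I) (Q : pred I) (F : I -> X) z :
  ip (\sum_(i <- r | Q i) F i) z = \sum_(i <- r | Q i) ip (F i) z.
Proof.
elim/big_rec2: _ => [|i y1 y2 _ <-]; first exact: ip0l.
exact: ipDl.
Qed.
Lemma ip_sumr I (r : seq I) (Q : pred I) (F : I -> X) z :
  ip z (\sum_(i <- r | Q i) F i) = \sum_(i <- r | Q i) ip z (F i).
Proof.
elim/big_rec2: _ => [|i y1 y2 _ <-]; first exact: ip0r.
exact: ipDr.
Qed.

Lemma PD x y : P (x + y) = P x + P y.
Proof. by have := pPm_lin 1 x y; rewrite !scale1r. Qed.
Lemma P0 : P 0 = 0.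
Proof. by have /eqP := PD 0 0; rewrite addr0 -subr_eq addrN eq_sym => /eqP. Qed.
Lemma PZ a x : P (a *: x) = a *: P x.
Proof. by have := pPm_lin a x 0; rewrite !addr0 P0 addr0. Qed.
Lemma PN x : P (- x) = - P x.
Proof. by rewrite -scaleN1r PZ scaleN1r. Qed.
Lemma PB x y : P (x - y) = P x - P y.
Proof. by rewrite PD PN. Qed.
Lemma P_xp x : P (x - P x) = 0.
Proof. by rewrite PB pPm_idem subrr. Qed.

Definition jip (x y : X) : C := ip (x - P x) (y - P y) - ip (P x) (P y).
Definition rn (x : X) : R := complex.Re (jip x x).
Definition J (x : X) : X := (x - P x) - P x.

Lemma pnsqE x : pnsq x = jip x x. Proof. by []. Qed.

Lemma ip_orth1 x y : ip (P x) (y - P y) = 0. Proof. exact: pPm_orth. Qed.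
Lemma ip_orth2 x y : ip (y - P y) (P x) = 0.
Proof. by rewrite pip_herm pPm_orth conjc0. Qed.

Lemma ip_jip x y : ip x y = jip x (J y).
Proof.
have ex : x = (x - P x) + P x by rewrite subrK.
have ey : y = (y - P y) + P y by rewrite subrK.
rewrite /jip /J PB P_xp sub0r pPm_idem.
have -> : y - P y - P y - - P y = y - P y by rewrite opprK subrK.
rewrite ipNr {1}ex {1}ey ipDl (ipDr _ _ (x - P x)) (ipDr _ _ (P x)) ip_orth1 ip_orth2; ring.
Qed.

Lemma PJ x : P (J x) = - P x.
Proof. by rewrite /J PB P_xp pPm_idem sub0r. Qed.
Lemma JK x : J (J x) = x.
Proof. by rewrite {1}/J PJ /J !opprK !subrK. Qed.

Lemma jipDl x y z : jip (x + y) z = jip x z + jip y z.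
Proof. rewrite /jip PD.
have -> : x + y - (P x + P y) = (x - P x) + (y - P y) by rewrite opprD addrACA.
rewrite !ipDl; ring. Qed.
Lemma jipZl a x z : jip (a *: x) z = a * jip x z.
Proof. rewrite /jip PZ -scalerBr !ipZl; ring. Qed.
Lemma jip_herm x y : jip x y = (jip y x)^*.
Proof. rewrite /jip (pip_herm (x - P x)) (pip_herm (P x)); exact/esym/rmorphB. Qed.
Lemma jipDr x y z : jip z (x + y) = jip z x + jip z y.
Proof. rewrite (jip_herm z (x+y)) (jip_herm z x) (jip_herm z y) jipDl; exact: rmorphD. Qed.
Lemma jipZr a x z : jip z (a *: x) = a^* * jip z x.
Proof. rewrite (jip_herm z) (jip_herm z x) jipZl; exact: rmorphM. Qed.
Lemma jip0l z : jip 0 z = 0.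
Proof. by rewrite -(scale0r 0) jipZl mul0r. Qed.
Lemma jip0r z : jip z 0 = 0.
Proof. by rewrite jip_herm jip0l conjc0. Qed.
Lemma jipNl x z : jip (- x) z = - jip x z.
Proof. by rewrite -scaleN1r jipZl mulN1r. Qed.
Lemma jipNr x z : jip z (- x) = - jip z x.
Proof. by apply/eqP; rewrite -subr_eq0 opprK -jipDr addNr jip0r. Qed.
Lemma jipBl x y z : jip (x - y) z = jip x z - jip y z.
Proof. by rewrite jipDl jipNl. Qed.
Lemma jipBr x y z : jip z (x - y) = jip z x - jip z y.
Proof. by rewrite jipDr jipNr. Qed.


Lemma ReM_real (t : R) (w : C) : complex.Re (t%:C * w) = t * complex.Re w.
Proof. by case: w => a b /=; rewrite mul0r subr0. Qed.
Lemma ImM_real (t : R) (w : C) : complex.Im (t%:C * w) = t * complex.Im w.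
Proof. by case: w => a b /=; rewrite mul0r addr0. Qed.
Lemma Re_conj (w : C) : complex.Re (w^*) = complex.Re w.
Proof. by case: w. Qed.
Lemma Im_conj (w : C) : complex.Im (w^*) = - complex.Im w.
Proof. by case: w. Qed.
Lemma ReD (w v : C) : complex.Re (w + v) = complex.Re w + complex.Re v.
Proof. by case: w; case: v. Qed.
Lemma ImD (w v : C) : complex.Im (w + v) = complex.Im w + complex.Im v.
Proof. by case: w; case: v. Qed.
Lemma ReN (w : C) : complex.Re (- w) = - complex.Re w.
Proof. by case: w. Qed.
Lemma ImN (w : C) : complex.Im (- w) = - complex.Im w.
Proof. by case: w. Qed.
Lemma ReB (w v : C) : complex.Re (w - v) = complex.Re w - complex.Re v.
Proof. by rewrite ReD ReN. Qed.
Lemma ImB (w v : C) : complex.Im (w - v) = complex.Im w - complex.Im v.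
Proof. by rewrite ImD ImN. Qed.
Lemma Re_i (w : C) : complex.Re ('i * w) = - complex.Im w.
Proof. by case: w => a b /=; rewrite !mul0r !mul1r sub0r. Qed.
Lemma Im_i (w : C) : complex.Im ('i * w) = complex.Re w.
Proof. by case: w => a b /=; rewrite !mul0r !mul1r add0r. Qed.

Lemma Im_ip x : complex.Im (ip x x) = 0.
Proof.
have h := pip_herm x x. have : complex.Im (ip x x) = - complex.Im (ip x x).
  by rewrite {1}h Im_conj.
move=> e; lra.
Qed.
Lemma Re_ip_pos a : P a = 0 -> 0 <= complex.Re (ip a a).
Proof.
move=> Pa; have [->|na] := eqVneq a 0; first by rewrite ip0l.
by have := ppos_def Pa na; rewrite ltcE => /andP[_ /ltW].
Qed.
Lemma Re_ip_neg a : P a = a -> complex.Re (ip a a) <= 0.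
Proof.
move=> Pa; have [->|na] := eqVneq a 0; first by rewrite ip0l.
by have := pneg_def Pa na; rewrite ltcE => /andP[_ /ltW].
Qed.

Lemma Im_jip x : complex.Im (jip x x) = 0.
Proof. by rewrite /jip ImB !Im_ip subrr. Qed.
Lemma jipE x : jip x x = (rn x)%:C.
Proof. by rewrite /rn; case: (jip x x) (Im_jip x) => a b /= ->. Qed.

Lemma rn_ge0 x : 0 <= rn x.
Proof.
rewrite /rn /jip ReB subr_ge0.
apply: (le_trans (Re_ip_neg (pPm_idem x))); exact: Re_ip_pos (P_xp x).
Qed.

Lemma rn_eq0 x : rn x <= 0 -> x = 0.
Proof.
rewrite /rn /jip ReB => h.
have h1 := Re_ip_pos (P_xp x). have h2 := Re_ip_neg (pPm_idem x).
have e1 : x - P x = 0.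
  apply/eqP; apply: contraT => nz; have := ppos_def (P_xp x) nz.
  rewrite ltcE => /andP[_ hh]; move: hh; rewrite /=; lra.
have e2 : P x = 0.
  apply/eqP; apply: contraT => nz; have := pneg_def (pPm_idem x) nz.
  rewrite ltcE => /andP[_ hh]; move: hh; rewrite /=; lra.
by move/eqP: e1; rewrite e2 subr0 => /eqP.
Qed.

Lemma rnD a b : rn (a + b) = rn a + rn b + 2 * complex.Re (jip a b).
Proof.
rewrite /rn jipDl !jipDr (jip_herm b a).
move: (jip a a) (jip a b) (jip b b) => [? ?] [? ?] [? ?] /=; ring.
Qed.
Lemma rnN a : rn (- a) = rn a.
Proof. by rewrite /rn jipNl jipNr opprK. Qed.
Lemma rnB a b : rn (a - b) = rn a + rn b - 2 * complex.Re (jip a b).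
Proof. rewrite rnD rnN jipNr; move: (jip a b) => [? ?] /=; ring. Qed.
Lemma rnZ (t : R) a : rn (t%:C *: a) = t ^+ 2 * rn a.
Proof. by rewrite /rn jipZl jipZr; move: (jip a a) => [? ?] /=; ring. Qed.
Lemma rni a : rn ('i *: a) = rn a.
Proof.
by rewrite /rn jipZl jipZr; move: (jip a a) => [? ?] /=; ring.
Qed.
Lemma rnJ a : rn (J a) = rn a.
Proof.
rewrite /rn /jip PJ.
have -> : J a - - P a = a - P a by rewrite /J opprK subrK.
by rewrite ipNl ipNr opprK.
Qed.

Lemma rn_le2 a b : rn (a + b) <= 2 * rn a + 2 * rn b.
Proof. have := rn_ge0 (a - b); rewrite rnB rnD; lra. Qed.

Lemma reip_le1 a b : 2 * complex.Re (jip a b) <= rn a + rn b.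
Proof. have := rn_ge0 (a - b); rewrite rnB; lra. Qed.

Lemma reip_le (c : R) a b : 0 < c ->
  2 * complex.Re (jip a b) <= c * rn a + c^-1 * rn b.
Proof.
move=> c0; set s := Num.sqrt c.
have s0 : 0 < s by rewrite /s sqrtr_gt0.
have ss : s ^+ 2 = c by rewrite /s sqr_sqrtr // ltW.
have e : jip a b = jip (s%:C *: a) (s^-1%:C *: b).
  have hs : s != 0 by rewrite gt_eqF.
  rewrite jipZl jipZr; move: (jip a b) => [p q] /=.
  apply/eqP; rewrite eq_complex /=; apply/andP; split; apply/eqP; field; exact: hs.
rewrite e; apply: (le_trans (reip_le1 _ _)); rewrite !rnZ ss exprVn ss.
by [].
Qed.

Lemma reip_ge (c : R) a b : 0 < c ->
  - (c * rn a + c^-1 * rn b) <= 2 * complex.Re (jip a b).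
Proof.
move=> c0; have := reip_le (-a) b c0; rewrite rnN jipNl ReN; lra.
Qed.
Lemma imip_le (c : R) a b : 0 < c ->
  2 * `|complex.Im (jip a b)| <= c * rn a + c^-1 * rn b.
Proof.
move=> c0; have h1 := reip_le ('i *: a) b c0; have h2 := reip_ge ('i *: a) b c0.
move: h1 h2; rewrite rni jipZl Re_i.
have [h|h] := lerP 0 (complex.Im (jip a b)).
  rewrite ger0_norm //; lra.
rewrite ltr0_norm //; lra.
Qed.
Lemma reip_abs (c : R) a b : 0 < c ->
  2 * `|complex.Re (jip a b)| <= c * rn a + c^-1 * rn b.
Proof.
move=> c0; have h1 := reip_le a b c0; have h2 := reip_ge a b c0.
have [h|h] := lerP 0 (complex.Re (jip a b)).
  rewrite ger0_norm //; lra.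
rewrite ltr0_norm //; lra.
Qed.

End Basics.


Section Real.
Variable R : realType.
Lemma le_eps (a : R) : (forall e, 0 < e -> a <= e) -> a <= 0.
Proof.
move=> h; rewrite leNgt; apply/negP => a0.
have := h (a / 2); rewrite divr_gt0 // => /(_ isT); lra.
Qed.

Lemma geo_le2 (r : R) k : 0 <= r <= 1/2 -> \sum_(j < k) r ^+ j <= 2.
Proof.
move=> /andP[r0 r1]; elim: k => [|k ih]; first by rewrite big_ord0.
rewrite big_ord_recl expr0.
under eq_bigr => j _ do rewrite exprS.
rewrite -mulr_sumr.
have : r * \sum_(i < k) r ^+ i <= 1/2 * 2.
  apply: ler_pM => //; rewrite sumr_ge0 // => i _; exact: exprn_ge0.
lra.
Qed.

Lemma pow_small (q K e : R) : 0 <= q <= 1/2 -> 0 <= K -> 0 < e ->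
  exists N, forall n, (N <= n)%N -> K * q ^+ n < e.
Proof.
move=> /andP[q0 q1] K0 e0.
exists (Num.Def.archi_bound (K / e)) => n hn.
have h1 := upper_nthrootP hn.
have h2 : q ^+ n <= (1/2) ^+ n by apply: lerXn2r => //; rewrite nnegrE // divr_ge0.
have h3 : (1/2 : R) ^+ n * 2 ^+ n = 1.
  by rewrite -exprMn mul1r mulVf ?expr1n //; lra.
have h4 : 0 < (2:R) ^+ n by rewrite exprn_gt0.
have h5 : K < e * 2 ^+ n by move: h1; rewrite ltr_pdivrMr // mulrC.
have : K * q ^+ n <= K * (1/2) ^+ n by apply: ler_wpM2l.
move=> h6; apply: (le_lt_trans h6).
rewrite -(ltr_pM2r h4) -mulrA h3 mulr1; exact: h5.
Qed.
End Real.

Section Ops.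
Variable R : realType.
Local Notation C := (R[i]).

Lemma lin_add (X Y : pspace R) (f : X -> Y) : is_linear f -> forall x y, f (x + y) = f x + f y.
Proof. by move=> hf x y; have := hf 1 x y; rewrite !scale1r. Qed.
Lemma lin0 (X Y : pspace R) (f : X -> Y) : is_linear f -> f 0 = 0.
Proof.
move=> hf; have /eqP := lin_add hf 0 0.
by rewrite addr0 -subr_eq addrN eq_sym => /eqP.
Qed.
Lemma linZ (X Y : pspace R) (f : X -> Y) : is_linear f -> forall a x, f (a *: x) = a *: f x.
Proof. by move=> hf a x; have := hf a x 0; rewrite !addr0 lin0 // addr0. Qed.
Lemma linN (X Y : pspace R) (f : X -> Y) : is_linear f -> forall x, f (- x) = - f x.
Proof. by move=> hf x; rewrite -scaleN1r linZ // scaleN1r. Qed.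
Lemma linB (X Y : pspace R) (f : X -> Y) : is_linear f -> forall x y, f (x - y) = f x - f y.
Proof. by move=> hf x y; rewrite lin_add // linN. Qed.
Lemma lin_sum (X Y : pspace R) (f : X -> Y) : is_linear f -> forall k (v : 'I_k -> X),
  f (\sum_(j < k) v j) = \sum_(j < k) f (v j).
Proof.
move=> hf k v; elim/big_rec2: _ => [|i y1 y2 _ <-]; first exact: lin0.
exact: lin_add.
Qed.

Lemma ReMr (w : C) (t : R) : complex.Re (w * t%:C) = complex.Re w * t.
Proof. by case: w => a b /=; rewrite mulr0 subr0. Qed.

Lemma bounded_rn (X Y : pspace R) (f : X -> Y) : is_bounded f ->
  exists M : R, 0 < M /\ forall x, rn (f x) <= M * rn x.
Proof.
case=> M hM; exists (`|complex.Re M| + 1); split.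
  by apply: (lt_le_trans ltr01); rewrite lerDr.
move=> x; have := hM x; rewrite !pnsqE !jipE lecE => /andP[_].
rewrite ReMr /= => h.
apply: (le_trans h); apply: ler_wpM2r; first exact: rn_ge0.
apply: (le_trans (ler_norm _)); rewrite lerDl //.
Qed.

Lemma complete_rn (X : pspace R) (s : nat -> X) :
  (forall e : R, 0 < e -> exists N, forall m n, (N <= m)%N -> (N <= n)%N -> rn (s m - s n) < e) ->
  exists x, forall e : R, 0 < e -> exists N, forall n, (N <= n)%N -> rn (s n - x) < e.
Proof.
move=> hc.
have [x hx] : exists x, forall eps : C, 0 < eps -> exists N, forall n, (N <= n)%N ->
  pnsq (s n - x) < eps.
  apply: (@pcomplete R X s) => eps; rewrite ltcE /= => /andP[/eqP hi hr].
  have [N hN] := hc _ hr; exists N => m n hm hn.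
  change (jip (s m - s n) (s m - s n) < eps).
  by rewrite jipE ltcE /= hi eqxx /= hN.
exists x => e e0; have [|N hN] := hx (e%:C); first by rewrite ltcR.
by exists N => n hn; have := hN n hn; rewrite pnsqE jipE ltcR.
Qed.
End Ops.

Lemma conjNR (R : realType) (t : R) : Num.conj (t%:C) = t%:C.
Proof. by apply/eqP; rewrite eq_complex /= oppr0 !eqxx. Qed.
Lemma jipZr_real (R : realType) (X : pspace R) (t : R) (x z : X) : jip z (t%:C *: x) = t%:C * jip z x.
Proof. by rewrite jipZr conjNR. Qed.
Lemma ipZr_real (R : realType) (X : pspace R) (t : R) (x z : X) : pip z (t%:C *: x) = t%:C * pip z x.
Proof. by rewrite ipZr conjNR. Qed.
Lemma ReNconj (R : realType) (w : R[i]) : complex.Re (Num.conj w) = complex.Re w.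
Proof. by case: w. Qed.
Lemma ImNconj (R : realType) (w : R[i]) : complex.Im (Num.conj w) = - complex.Im w.
Proof. by case: w. Qed.

Lemma absb (R : realType) (x : R) : - `|x| <= x /\ x <= `|x|.
Proof. by case: (lerP 0 x) => h; [rewrite (ger0_norm h) | rewrite (ltr0_norm h)]; split; lra. Qed.

Section ZmodFacts.
Variable V : zmodType.
Lemma zt1 (x y a b : V) : x - b - y = x - (y + a) + (a - b).
Proof. by rewrite opprD !addrA subrK addrAC. Qed.
Lemma zt2 (y a b : V) : (y + a) - (y + b) = a - b.
Proof. by rewrite opprD addrACA subrr add0r. Qed.
Lemma zt3 (u v w : V) : u - w = (v - w) + (u - v).
Proof. by rewrite [RHS]addrC addrA subrK. Qed.
End ZmodFacts.

Section SumBound.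
Variable R : realType.
Variable X : pspace R.
Lemma rn_sum k (v : nat -> X) :
  rn (\sum_(j < k) v j) <= 2 * \sum_(j < k) 2 ^+ j * rn (v j).
Proof.
elim: k v => [|k ih] v.
  by rewrite !big_ord0 mulr0 /rn jip0l.
rewrite big_ord_recl [X in _ <= 2 * X]big_ord_recl /=.
apply: (le_trans (rn_le2 _ _)).
have h := ih (fun j => v j.+1).
have eb : forall i : 'I_k, bump 0 i = i.+1 by move=> i; rewrite /bump leq0n add1n.
under eq_bigr => i _ do rewrite eb.
under [X in _ <= 2 * (_ + X)]eq_bigr => i _ do rewrite eb exprS -mulrA.
rewrite -mulr_sumr expr0 mul1r.
lra.
Qed.

End SumBound.

Section Resolvent.
Variable R : realType.
Local Notation C := (R[i]).
Variables (X : pspace R) (A : X -> X) (M t : R).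
Hypotheses (hA : is_linear A) (M0 : 0 < M) (hM : forall x, rn (A x) <= M * rn x)
  (ht : t ^+ 2 * M <= 1 / 16).
Local Notation L := (IminusZ (t%:C) A).

Lemma L_lin : is_linear L.
Proof.
move=> a x y; rewrite /IminusZ hA scalerDr !scalerA mulrC -scalerA scalerBr.
by rewrite opprD addrACA.
Qed.

Lemma rn_tA x : rn (t%:C *: A x) <= t ^+ 2 * M * rn x.
Proof. rewrite rnZ -mulrA; apply: ler_wpM2l; [exact: sqr_ge0 | exact: hM]. Qed.

Lemma L_low x : rn x <= 4 * rn (L x).
Proof.
have e : x = L x + t%:C *: A x by rewrite /IminusZ subrK.
have h1 : rn x <= 2 * rn (L x) + 2 * rn (t%:C *: A x) by rewrite {1}e; exact: rn_le2.
have h2 := rn_tA x.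
have h3 : t ^+ 2 * M * rn x <= 1/16 * rn x by apply: ler_wpM2r => //; exact: rn_ge0.
have := rn_ge0 (L x); lra.
Qed.

Lemma L_inj x y : L x = L y -> x = y.
Proof.
move=> e; apply/eqP; rewrite -subr_eq0; apply/eqP; apply: rn_eq0.
have := L_low (x - y); rewrite (linB L_lin) e subrr /rn jip0l /=; lra.
Qed.

Lemma L_surj y : exists x, L x = y.
Proof.
pose f := fun x => y + t%:C *: A x.
pose s n := iter n f 0.
pose d n := s n.+1 - s n.
pose q := t ^+ 2 * M.
have q0 : 0 <= q by rewrite /q mulr_ge0 // ?sqr_ge0 // ltW.
have hd n : d n.+1 = t%:C *: A (d n).
  by rewrite /d /s !iterS /f zt2 -scalerBr -(linB hA).
have hd0 : d 0 = y by rewrite /d /s /= /f lin0 // scaler0 addr0 subr0.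
have hrd n : rn (d n) <= q ^+ n * rn y.
  elim: n => [|n ih]; first by rewrite hd0 expr0 mul1r.
  rewrite hd; apply: (le_trans (rn_tA _)); rewrite -/q exprS -mulrA.
  by apply: ler_wpM2l.
have tele n k : s (n + k)%N - s n = \sum_(j < k) d (n + j)%N.
  elim: k => [|k ih]; first by rewrite addn0 subrr big_ord0.
  by rewrite big_ord_recr /= -ih addnS /d -zt3.
have hc n k : rn (s (n + k)%N - s n) <= 4 * q ^+ n * rn y.
  rewrite tele; apply: (le_trans (rn_sum k (fun j => d (n + j)%N))).
  have : \sum_(j < k) 2 ^+ j * rn (d (n + j)%N) <= q ^+ n * rn y * \sum_(j < k) (2 * q) ^+ j.
    rewrite mulr_sumr; apply: ler_sum => j _.
    apply: (@le_trans _ _ (2 ^+ j * (q ^+ (n + j)%N * rn y))).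
      by apply: ler_wpM2l; [exact: exprn_ge0 | exact: hrd].
    by rewrite [(2 * q) ^+ j]exprMn [q ^+ (n + j)%N]exprD le_eqVlt; apply/orP; left; apply/eqP; ring.
  have g := @geo_le2 R (2 * q) k.
  have hq : 0 <= 2 * q <= 1/2 by have qh : q <= 1/16 := ht; apply/andP; split; lra.
  have := g hq => g2 h.
  have h3 : q ^+ n * rn y * \sum_(j < k) (2 * q) ^+ j <= q ^+ n * rn y * 2.
    by apply: ler_wpM2l => //; rewrite mulr_ge0 ?exprn_ge0 ?rn_ge0.
  rewrite -mulrA; move: h h3 g2; set a := q ^+ n * rn y; set S1 := \sum_(j < k) _; set S2 := \sum_(j < k) _.
  move=> h h3 g2; lra.
have [x hx] : exists x, forall e : R, 0 < e -> exists N, forall n, (N <= n)%N -> rn (s n - x) < e.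
  apply: complete_rn => e e0.
  have hq : 0 <= q <= 1/2 by have qh : q <= 1/16 := ht; apply/andP; split; lra.
  have [N hN] := pow_small hq (mulr_ge0 (ler0n _ 4) (rn_ge0 y)) e0.
  exists N => m n hm hn.
  wlog nm : m n hm hn / (n <= m)%N.
    move=> hw; case: (leqP n m) => h; first exact: hw.
    by rewrite -rnN opprB; apply: hw => //; exact: ltnW.
  rewrite -(subnKC nm); apply: (le_lt_trans (hc _ _)).
  by rewrite mulrAC; apply: hN.
exists x; apply/eqP; rewrite -subr_eq0; apply/eqP; apply: rn_eq0; apply: le_eps => e e0.
have [|N hN] := hx (e / 8); first by rewrite divr_gt0.
have e1 : L x - y = (x - s N.+1) + t%:C *: A (s N - x).
  by rewrite /IminusZ /s iterS -/(s N) /f (linB hA) scalerBr; exact: zt1.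
rewrite e1; apply: (le_trans (rn_le2 _ _)).
have h1 := hN N.+1 (leqnSn _).
have h2 := hN N (leqnn _).
have h3 := rn_tA (s N - x).
have h4 : t ^+ 2 * M * rn (s N - x) <= 1/16 * rn (s N - x) by apply: ler_wpM2r => //; exact: rn_ge0.
rewrite -rnN opprB in h1.
have := rn_ge0 (s N - x); lra.
Qed.
End Resolvent.

Section GFacts.
Variable R : realType.
Local Notation C := (R[i]).
Variables (X : pspace R) (A : X -> X) (M t : R).
Hypotheses (hA : is_linear A) (M0 : 0 < M) (hM : forall x, rn (A x) <= M * rn x)
  (ht : t ^+ 2 * M <= 1 / 16).
Local Notation L := (IminusZ (t%:C) A).
Local Notation G := (opinv (IminusZ (t%:C) A)).

Lemma G_spec : (forall x, G (L x) = x) /\ (forall y, L (G y) = y).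
Proof.
apply: (@epsilon_spec _ _ (fun g : X -> X => (forall x, g (L x) = x) /\ (forall x, L (g x) = x))).
pose g y := proj1_sig (constructive_indefinite_description _ (L_surj hA M0 hM ht y)).
have hg y : L (g y) = y by rewrite /g; case: constructive_indefinite_description.
exists g; split; last exact: hg.
move=> x; apply: (L_inj hA hM ht); exact: hg.
Qed.
Lemma GL x : G (L x) = x. Proof. exact: G_spec.1. Qed.
Lemma LG y : L (G y) = y. Proof. exact: G_spec.2. Qed.
Lemma G_lin : is_linear G.
Proof.
move=> a x y; apply: (L_inj hA hM ht).
by rewrite (L_lin t hA) !LG.
Qed.
Lemma G_bd y : rn (G y) <= 4 * rn y.
Proof. by have := L_low hM ht (G y); rewrite LG. Qed.
Lemma G_eq y : G y = y + t%:C *: A (G y).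
Proof. by have := LG y; rewrite /IminusZ => e; rewrite -{2}e subrK. Qed.
End GFacts.

Lemma inv_small (R : realType) (e : R) : 0 < e ->
  exists N, forall n, (N <= n)%N -> 1 / (n.+1)%:R < e.
Proof.
move=> e0; exists (Num.Def.archi_bound (1 / e)) => n hn.
have h1 : 1 / e < (Num.Def.archi_bound (1 / e))%:R.
  by apply: archi_boundP; rewrite divr_ge0 // ltW.
have h2 : (Num.Def.archi_bound (1 / e))%:R <= (n.+1)%:R :> R by rewrite ler_nat; apply: leqW.
have h3 : 1 / e < (n.+1)%:R by exact: lt_le_trans h2.
have hn0 : (0 : R) < (n.+1)%:R by rewrite ltr0Sn.
rewrite ltr_pdivrMr // mulrC -ltr_pdivrMr //.
Qed.

Lemma quad_zero (R : realType) (a r : R) : 0 <= r ->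
  (forall l : R, 0 <= 2 * l * a + l ^+ 2 * r) -> a = 0.
Proof.
move=> r0 h; pose l := - a / (r + 1).
have r1 : 0 < r + 1 by lra.
have e : l * (r + 1) = - a by rewrite /l mulrVK // unitfE gt_eqF.
have := h l; move: e; clearbody l => e hl.
have : 0 <= (2 * l * a + l ^+ 2 * r) * (r + 1) ^+ 2 by rewrite mulr_ge0 // sqr_ge0.
have -> : (2 * l * a + l ^+ 2 * r) * (r + 1) ^+ 2 = 2 * (l * (r + 1)) * a * (r + 1) + (l * (r + 1)) ^+ 2 * r by ring.
rewrite e => h2.
have e2 : 2 * - a * a * (r + 1) + (- a) ^+ 2 * r = - (a ^+ 2 * (r + 2)) by ring.
have : a ^+ 2 * (r + 2) <= 0 by rewrite -oppr_ge0 -e2.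
move=> h3; have h4 : a ^+ 2 <= 0.
  by move: h3; rewrite pmulr_lle0 //; lra.
by apply/eqP; rewrite -sqrf_eq0 eq_le h4 sqr_ge0.
Qed.

Lemma cplx_eq (R : realType) (w v : R[i]) : complex.Re w = complex.Re v -> complex.Im w = complex.Im v -> w = v.
Proof. by case: w => ? ?; case: v => ? ? /= -> ->. Qed.

Lemma jip_small (R : realType) (X : pspace R) (h : X) (e : R) : 0 < e ->
  exists d : R, 0 < d /\ forall x : X, rn x < d -> 2 * `|complex.Re (jip x h)| < e.
Proof.
move=> e0; pose K := rn h + 1.
have K0 : 0 < K by rewrite /K; have := rn_ge0 h; lra.
pose c := 2 * K / e.
have c0 : 0 < c by rewrite /c mulr_gt0 // ?invr_gt0 // mulr_gt0.
exists (e / (2 * c)); split; first by rewrite divr_gt0 // mulr_gt0.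
move=> x hx; apply: (le_lt_trans (reip_abs x h c0)).
have h1 : c * rn x < c * (e / (2 * c)) by rewrite ltr_pM2l.
have h2 : c * (e / (2 * c)) = e / 2 by field; rewrite gt_eqF.
have h3 : c^-1 * rn h <= c^-1 * K.
  by apply: ler_wpM2l; [rewrite invr_ge0 ltW | rewrite /K lerDl ler01].
have h4 : c^-1 * K = e / 2 by rewrite /c; field; rewrite ?gt_eqF.
lra.
Qed.

Section Riesz.
Variable R : realType.
Local Notation C := (R[i]).
Variables (X Y : pspace R) (f : X -> Y) (M : R).
Hypotheses (hf : is_linear f) (M0 : 0 < M) (hM : forall x, rn (f x) <= M * rn x).
Variable y : Y.

Definition phi (h : X) : C := pip (f h) y.
Definition rphi h := complex.Re (phi h).
Definition FF x := rn x - 2 * rphi x.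

Lemma phiD a b : phi (a + b) = phi a + phi b.
Proof. by rewrite /phi (lin_add hf) ipDl. Qed.
Lemma phiZ c a : phi (c *: a) = c * phi a.
Proof. by rewrite /phi (linZ hf) ipZl. Qed.

Lemma FF_lb x : rn x / 2 - 2 * M * rn y <= FF x.
Proof.
rewrite /FF /rphi /phi ip_jip.
have c0 : 0 < (2 * M)^-1 by rewrite invr_gt0 mulr_gt0.
have := reip_le (f x) (J y) c0; rewrite rnJ invrK => h.
have h2 : (2 * M)^-1 * rn (f x) <= (2 * M)^-1 * (M * rn x) by apply: ler_wpM2l; [rewrite ltW | ].
have h3 : (2 * M)^-1 * (M * rn x) = rn x / 2 by field; rewrite gt_eqF.
lra.
Qed.

Definition SS : classical_sets.set R := fun r => exists x, FF x = r.
Definition mm := inf SS.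

Lemma SS_inf : classical_sets.has_inf SS.
Proof.
split; first by exists (FF 0); exists 0.
exists (- (2 * M * rn y)) => r [x <-].
have := FF_lb x; have := rn_ge0 x; lra.
Qed.

Lemma mm_le x : mm <= FF x.
Proof. by apply: (ge_inf (SS_inf.2)); exists x. Qed.

Lemma mm_adh n : exists x, FF x < mm + 1 / (n.+1)%:R.
Proof.
have e0 : (0 : R) < 1 / (n.+1)%:R by rewrite divr_gt0 // ltr0Sn.
have [r [x <-] hr] := inf_adherent e0 SS_inf.
by exists x.
Qed.

Definition xs n := proj1_sig (constructive_indefinite_description _ (mm_adh n)).
Lemma xs_spec n : FF (xs n) < mm + 1 / (n.+1)%:R.
Proof. by rewrite /xs; case: constructive_indefinite_description. Qed.

Lemma FF_exp x (l : R) h : FF (x + l%:C *: h) = FF x + 2 * l * (complex.Re (jip x h) - rphi h) + l ^+ 2 * rn h.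
Proof.
rewrite /FF rnD rnZ /rphi phiD phiZ jipZr.
by move: (jip x h) (phi x) (phi h) => [? ?] [? ?] [? ?] /=; ring.
Qed.

Lemma FF_mid a b : rn (a - b) <= 2 * FF a + 2 * FF b - 4 * mm.
Proof.
have := mm_le ((1/2)%:C *: (a + b)).
rewrite /FF rnZ /rphi phiZ phiD ReM_real ReD.
have := rnB a b; have := rnD a b; lra.
Qed.

Lemma xs_cauchy (e : R) : 0 < e -> exists N, forall m n, (N <= m)%N -> (N <= n)%N -> rn (xs m - xs n) < e.
Proof.
move=> e0; have e4 : 0 < e / 4 by rewrite divr_gt0.
have [N hN] := inv_small e4.
exists N => m n hm hn.
apply: (le_lt_trans (FF_mid _ _)).
have := xs_spec m; have := xs_spec n; have := hN m hm; have := hN n hn.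
move: (1 / (m.+1)%:R) (1 / (n.+1)%:R) => a b; lra.
Qed.

Lemma riesz_pt : exists z : X, forall h, phi h = jip h z.
Proof.
have [z0 hz] := complete_rn xs_cauchy.
have fo h (l : R) : 0 <= 2 * l * (complex.Re (jip z0 h) - rphi h) + l ^+ 2 * rn h.
  rewrite -oppr_le0; apply: le_eps => e e0.
  have e2 : 0 < e / 2 by rewrite divr_gt0.
  have [d [d0 hd]] := jip_small (l%:C *: h) e2.
  have [N1 hN1] := hz d d0.
  have [N2 hN2] := inv_small e2.
  pose n := maxn N1 N2.
  have h1 := hN1 n (leq_maxl _ _).
  have h2 := hN2 n (leq_maxr _ _).
  have h3 := hd _ h1.
  have h4 := mm_le (xs n + l%:C *: h).
  have h5 := xs_spec n.
  rewrite FF_exp in h4.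
  have e1 : 2 * l * complex.Re (jip z0 h) = 2 * l * complex.Re (jip (xs n) h) - 2 * complex.Re (jip (xs n - z0) (l%:C *: h)).
    rewrite jipBl !jipZr_real; move: (jip (xs n) h) (jip z0 h) => a b.
    rewrite ReB !ReM_real; ring.
  have [h6 h7] := absb (complex.Re (jip (xs n - z0) (l%:C *: h))).
  have h8 : 2 * complex.Re (jip (xs n - z0) (l%:C *: h)) < e / 2.
    by apply: le_lt_trans h3; rewrite ler_pM2l.
  have h9 : - (e / 2) < 2 * complex.Re (jip (xs n - z0) (l%:C *: h)).
    rewrite ltrNl; apply: le_lt_trans h3; rewrite -mulrN ler_pM2l //; by rewrite lerNl.
  move: e1 h4 h5 h2 h8 h9; clear h3 h6 h7.
  move: (complex.Re (jip (xs n - z0) (l%:C *: h))) (complex.Re (jip (xs n) h)) (1 / (n.+1)%:R) => J1 J2 a.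
  move=> *; lra.
have hre h : complex.Re (jip h z0) = rphi h.
  rewrite jip_herm ReNconj.
  apply/eqP; rewrite -subr_eq0; apply/eqP.
  by apply: (quad_zero (rn_ge0 h)) => l; have := fo h l.
exists z0 => h; apply: cplx_eq; first by rewrite hre.
have := hre ('i *: h); rewrite jipZl /rphi phiZ.
by move: (jip h z0) (phi h) => [a b] [c d] /=; lra.
Qed.
End Riesz.


Section Adj.
Variable R : realType.
Local Notation C := (R[i]).

Lemma adj_spec (X Y : pspace R) (f : X -> Y) : bounded_op f ->
  forall x y, pip (f x) y = pip x (adj f y).
Proof.
case=> hf /bounded_rn [M [M0 hM]].
have ex y : exists z : X, forall h, pip (f h) y = pip h z.
  have [z hz] := riesz_pt hf M0 hM y.
  by exists (J z) => h; rewrite (ip_jip h) JK -hz.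
apply: (@epsilon_spec _ _ (fun g : Y -> X => forall x y, pip (f x) y = pip x (g y))).
pose g y := proj1_sig (constructive_indefinite_description _ (ex y)).
exists g => x y; rewrite /g; case: constructive_indefinite_description => z /=; apply.
Qed.

Lemma ip_nondeg (X : pspace R) (a b : X) : (forall z, pip z a = pip z b) -> a = b.
Proof.
move=> h; apply/eqP; rewrite -subr_eq0; apply/eqP; apply: rn_eq0.
have e : pip (J (a - b)) (a - b) = 0 by rewrite ipBr (h (J (a - b))) subrr.
move: e; rewrite ip_jip jipE rnJ => /(congr1 (@complex.Re R)) /= ->; exact: lexx.
Qed.

Lemma iter_lin (X : pspace R) (A : X -> X) k : is_linear A -> is_linear (iter k A).
Proof.
move=> hA; elim: k => [|k ih] a x y //=.
by rewrite ih hA.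
Qed.

Lemma iter_bd (X : pspace R) (A : X -> X) (M : R) k : 0 < M ->
  (forall x, rn (A x) <= M * rn x) -> forall x, rn (iter k A x) <= M ^+ k * rn x.
Proof.
move=> M0 hM x; elim: k => [|k ih]; first by rewrite expr0 mul1r.
rewrite iterS exprS -mulrA; apply: (le_trans (hM _)); apply: ler_wpM2l => //; exact: ltW.
Qed.

Lemma small_delta (M : R) : 0 < M -> exists d : R, 0 < d /\ forall t : R, `|t| < d -> t ^+ 2 * M <= 1 / 16.
Proof.
move=> M0; exists (1 / (4 * (M + 1))); split; first by rewrite divr_gt0 // mulr_gt0 //; lra.
move=> t ht.
have d0 : 0 < 1 / (4 * (M + 1)) by rewrite divr_gt0 // mulr_gt0 //; lra.
have h1 : t ^+ 2 <= (1 / (4 * (M + 1))) ^+ 2.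
  rewrite -real_normK ?num_real //; apply: lerXn2r; rewrite ?nnegrE ?normr_ge0 ?ltW //.
have h2 : t ^+ 2 * M <= (1 / (4 * (M + 1))) ^+ 2 * M by rewrite ler_wpM2r // ltW.
apply: (le_trans h2).
have -> : (1 / (4 * (M + 1))) ^+ 2 * M = 1 / 16 * (M / ((M + 1) * (M + 1))).
  by field; lra.
apply: ler_piMr; first by rewrite divr_ge0.
rewrite ler_pdivrMr ?mul1r; last by rewrite mulr_gt0 //; lra.
nra.
Qed.

Lemma zero_from_small (x K d : R) : 0 < d -> 0 <= K ->
  (forall tau, 0 < tau -> tau < d -> `|x| <= tau * K) -> x = 0.
Proof.
move=> d0 K0 h; apply/eqP; rewrite -normr_le0; apply: le_eps => e e0.
pose tau := Num.min (d / 2) (e / (K + 1)).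
have t0 : 0 < tau by rewrite lt_min !divr_gt0 //; lra.
have t1 : tau < d by rewrite /tau gt_min; apply/orP; left; lra.
have t2 : tau <= e / (K + 1) by rewrite /tau ge_min lexx orbT.
apply: (le_trans (h _ t0 t1)).
have : tau * K <= e / (K + 1) * K by rewrite ler_wpM2r.
have : e / (K + 1) * K <= e.
  rewrite mulrAC ler_pdivrMr; last by lra.
  by rewrite ler_pM2l //; lra.
lra.
Qed.
End Adj.


Section OneSys.
Variable R : realType.
Local Notation C := (R[i]).
Variables (U X : pspace R) (A : X -> X) (B : U -> X) (MA d : R).
Hypotheses (hA : bounded_op A) (hB : bounded_op B) (MA0 : 0 < MA)
  (hMA : forall x, rn (A x) <= MA * rn x)
  (hd : forall t : R, `|t| < d -> t ^+ 2 * MA <= 1 / 16).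
Local Notation G t := (opinv (IminusZ (t%:C) A)).
Local Notation L t := (IminusZ (t%:C) A).
Local Notation L' t := (IminusZ (t%:C) (adj A)).

Lemma Lstar (s : R) x z : pip (L s x) z = pip x (L' s z).
Proof. by rewrite /IminusZ ipBl ipBr ipZl ipZr_real (adj_spec hA). Qed.

Lemma G_bop (s : R) : `|s| < d -> bounded_op (G s).
Proof.
move=> hs; have ht := hd hs; split; first exact: (G_lin hA.1 MA0 hMA ht).
exists (4%:R : R)%:C => y; rewrite !pnsqE !jipE -rmorphM lecR.
exact: (G_bd hA.1 MA0 hMA ht).
Qed.

Lemma H_spec (s : R) : `|s| < d -> forall w, L' s (opinv (L' s) w) = w.
Proof.
move=> hs; have ht := hd hs.
suff : (forall x, opinv (L' s) (L' s x) = x) /\ (forall w, L' s (opinv (L' s) w) = w) by case.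
apply: (@epsilon_spec _ _ (fun g : X -> X => (forall x, g (L' s x) = x) /\ (forall x, L' s (g x) = x))).
exists (adj (G s)); split => x; apply: ip_nondeg => z.
  by rewrite -(adj_spec (G_bop hs)) -Lstar (LG hA.1 MA0 hMA ht).
by rewrite -Lstar -(adj_spec (G_bop hs)) (GL hA.1 MA0 hMA ht).
Qed.

Lemma gram_repr (s t : R) (u v : U) : `|s| < d -> `|t| < d ->
  pip v (adj B (opinv (L' s) (G t (B u)))) = pip (G s (B v)) (G t (B u)).
Proof.
move=> hs htt; have ht := hd hs.
rewrite -(adj_spec hB) -{1}(LG hA.1 MA0 hMA ht (B v)) Lstar H_spec //.
Qed.

Lemma G0 y : G 0 y = y.
Proof.
have h0 : `|0 : R| < d -> True by [].
have ht : (0 : R) ^+ 2 * MA <= 1 / 16 by rewrite expr0n mul0r divr_ge0.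
have := GL hA.1 MA0 hMA ht y.
by rewrite /IminusZ scale0r subr0.
Qed.

Lemma G_iter (t : R) k y : `|t| < d ->
  iter k A (G t y) = iter k A y + t%:C *: iter k.+1 A (G t y).
Proof.
move=> hs; have ht := hd hs.
rewrite {1}(G_eq hA.1 MA0 hMA ht y) (lin_add (iter_lin k hA.1)) (linZ (iter_lin k hA.1)).
by rewrite iterSr.
Qed.

Lemma E1 (a : X) k (t : R) y : `|t| < d ->
  pip a (iter k A (G t y)) = pip a (iter k A (G 0 y)) + t%:C * pip a (iter k.+1 A (G t y)).
Proof. by move=> ht; rewrite G0 (G_iter k y ht) ipDr ipZr_real. Qed.

Lemma E2 (a : X) k (t : R) y : `|t| < d ->
  (`|complex.Re (pip a (iter k A (G t y)))| <= rn a + MA ^+ k * (4 * rn y)) *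
  (`|complex.Im (pip a (iter k A (G t y)))| <= rn a + MA ^+ k * (4 * rn y)).
Proof.
move=> hs; have ht := hd hs.
have hb : rn (iter k A (G t y)) <= MA ^+ k * (4 * rn y).
  apply: (le_trans (iter_bd k MA0 hMA _)); apply: ler_wpM2l; first by rewrite exprn_ge0 // ltW.
  exact: (G_bd hA.1 MA0 hMA ht).
have c1 : (0:R) < 1 by [].
have := reip_abs a (J (iter k A (G t y))) c1.
have := imip_le a (J (iter k A (G t y))) c1.
rewrite -!ip_jip rnJ invr1 !mul1r => h1 h2.
have := rn_ge0 a; have := rn_ge0 (iter k A (G t y)).
move: h1 h2 hb; set P := `|_|; set Q := `|_|; clearbody P Q => h1 h2 hb h3 h4.
split; lra.
Qed.
End OneSys.

Definition Psi (R : realType) (U Z : pspace R) (A : Z -> Z) (B : U -> Z) j k (s t : R) (u v : U) :=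
  pip (iter j A (opinv (IminusZ s%:C A) (B v))) (iter k A (opinv (IminusZ t%:C A) (B u))).

Section Two.
Variable R : realType.
Local Notation C := (R[i]).
Variables (U X X0 : pspace R) (A : X -> X) (B : U -> X) (A0 : X0 -> X0) (B0 : U -> X0) (MA MA0 d : R).
Hypotheses (hA : bounded_op A) (hB : bounded_op B) (MAp : 0 < MA)
  (hMA : forall x, rn (A x) <= MA * rn x)
  (hd : forall t : R, `|t| < d -> t ^+ 2 * MA <= 1 / 16).
Hypotheses (hA0 : bounded_op A0) (hB0 : bounded_op B0) (MA0p : 0 < MA0)
  (hMA0 : forall x, rn (A0 x) <= MA0 * rn x)
  (hd0 : forall t : R, `|t| < d -> t ^+ 2 * MA0 <= 1 / 16) (d0 : 0 < d).

Definition Peq j k := forall u v (s t : R), `|s| < d -> `|t| < d ->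
  Psi A B j k s t u v = Psi A0 B0 j k s t u v.

Lemma abs0d : `|0 : R| < d. Proof. by rewrite normr0. Qed.

Lemma kstep j k : Peq j k -> Peq j k.+1.
Proof.
move=> h u v s t hs ht; rewrite /Psi.
set a := iter j A _; set a0 := iter j A0 _.
have key (tau : R) : `|tau| < d -> tau != 0 ->
    pip a (iter k.+1 A (opinv (IminusZ tau%:C A) (B u))) =
    pip a0 (iter k.+1 A0 (opinv (IminusZ tau%:C A0) (B0 u))).
  move=> htau nz; have e := h u v s tau hs htau; have e0 := h u v s 0 hs abs0d.
  rewrite /Psi -/a -/a0 in e e0.
  rewrite (E1 hA MAp hMA hd a k (B u) htau) (E1 hA0 MA0p hMA0 hd0 a0 k (B0 u) htau) e0 in e.
  move/addrI: e => /mulfI; apply; by rewrite eq_complex /= eqxx andbT.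
have [->|nz] := eqVneq t 0; last exact: key.
set g1 := pip a _; set g01 := pip a0 _.
have hD (tau : R) : 0 < tau -> tau < d ->
    g1 - g01 = tau%:C * (pip a0 (iter k.+2 A0 (opinv (IminusZ tau%:C A0) (B0 u))) -
                         pip a (iter k.+2 A (opinv (IminusZ tau%:C A) (B u)))).
  move=> t0 td; have htau : `|tau| < d by rewrite (gtr0_norm t0).
  have := key tau htau (lt0r_neq0 t0).
  rewrite (E1 hA MAp hMA hd a k.+1 (B u) htau) (E1 hA0 MA0p hMA0 hd0 a0 k.+1 (B0 u) htau).
  rewrite -/g1 -/g01.
  move: (pip a _) (pip a0 _) => X2 Y2 e.
  have -> : g1 = g01 + tau%:C * Y2 - tau%:C * X2 by rewrite -e addrK.
  ring.
pose K := rn a + MA ^+ k.+2 * (4 * rn (B u)) + (rn a0 + MA0 ^+ k.+2 * (4 * rn (B0 u))).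
have K0 : 0 <= K.
  have h1 := rn_ge0 a; have h2 := rn_ge0 a0; have h3 := rn_ge0 (B u); have h4 := rn_ge0 (B0 u).
  have h5 : 0 <= MA ^+ k.+2 by rewrite exprn_ge0 // ltW.
  have h6 : 0 <= MA0 ^+ k.+2 by rewrite exprn_ge0 // ltW.
  have h7 : 0 <= MA ^+ k.+2 * (4 * rn (B u)) by rewrite mulr_ge0 // mulr_ge0.
  have h8 : 0 <= MA0 ^+ k.+2 * (4 * rn (B0 u)) by rewrite mulr_ge0 // mulr_ge0.
  rewrite /K; lra.
apply/eqP; rewrite -subr_eq0; apply/eqP; apply: cplx_eq.
  apply: (@zero_from_small _ _ K d d0 K0) => tau t0 td.
  have htau : `|tau| < d by rewrite (gtr0_norm t0).
  rewrite (hD tau t0 td) ReM_real ReB normrM gtr0_norm //; apply: ler_wpM2l; first exact: ltW.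
  apply: (le_trans (ler_normB _ _)); rewrite /K addrC.
  by apply: lerD; [exact: (E2 hA MAp hMA hd a k.+2 (B u) htau).1 | exact: (E2 hA0 MA0p hMA0 hd0 a0 k.+2 (B0 u) htau).1].
apply: (@zero_from_small _ _ K d d0 K0) => tau t0 td.
have htau : `|tau| < d by rewrite (gtr0_norm t0).
rewrite (hD tau t0 td) ImM_real ImB normrM gtr0_norm //; apply: ler_wpM2l; first exact: ltW.
apply: (le_trans (ler_normB _ _)); rewrite /K addrC.
by apply: lerD; [exact: (E2 hA MAp hMA hd a k.+2 (B u) htau).2 | exact: (E2 hA0 MA0p hMA0 hd0 a0 k.+2 (B0 u) htau).2].
Qed.

Lemma Peq_sym j k : Peq j k -> Peq k j.
Proof.
move=> h u v s t hs ht; rewrite /Psi (pip_herm (iter k A _)) (pip_herm (iter k A0 _)).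
by have := h v u t s ht hs; rewrite /Psi => ->.
Qed.

Lemma all_Peq : Peq 0 0 -> forall j k, Peq j k.
Proof.
move=> h0 j; elim: j => [|j ih] k.
  by elim: k => [|k ihk] //; exact: kstep.
by apply: Peq_sym; apply: kstep; apply: Peq_sym.
Qed.
End Two.


Lemma normC_real (R : realType) (t : R) : `|t%:C| = (`|t|)%:C.
Proof. by rewrite normc_def /= expr0n addr0 sqrtr_sqr. Qed.

Lemma energy_sum (R : realType) (U X : pspace R) (A : X -> X) (B : U -> X) n u :
  energy (ctrl_sum A B n u) =
  \sum_(k < n.+1) \sum_(j < n.+1) pip (iter k A (B (u k))) (iter j A (B (u j))).
Proof.
rewrite /energy /ctrl_sum ip_suml; apply: eq_bigr => k _; exact: ip_sumr.
Qed.

Unset Implicit Arguments.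
Set Strict Implicit.
Theorem mainTheorem11 (R : realType) (U Y X0 X : pspace R) (kappa : nat)
  (theta : R[i] -> U -> Y)
  (A0 : X0 -> X0) (B0 : U -> X0) (C0 : X0 -> Y)
  (A : X -> X) (B : U -> X) (Cc : X -> Y) (D : U -> Y) :
  in_Skappa kappa theta ->
  optimal A0 B0 C0 D kappa theta ->
  kadmissible A B Cc D kappa theta ->
  (exists r : R[i], 0 < r /\ forall z w : R[i], `|z| < r -> `|w| < r ->
     forall u : U,
       adj B (opinv (IminusZ (w^*)%C (adj A)) (opinv (IminusZ z A) (B u)))
       = adj B0 (opinv (IminusZ (w^*)%C (adj A0)) (opinv (IminusZ z A0) (B0 u)))) ->
  optimal A B Cc D kappa theta.
Proof.
move=> _ hopt hadm [r [r0 hr]].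
have [[[hA0 hB0 _ _ _] _] _ _] := hopt.1.
have hadm' := hadm.
case: hadm' => [[[hA hB _ _ _] _] _ _].
have [MA [MAp hMA]] := bounded_rn hA.2.
have [MA0 [MA0p hMA0]] := bounded_rn hA0.2.
have [d1 [d1p hd1]] := small_delta MAp.
have [d2 [d2p hd2]] := small_delta MA0p.
move: r0; rewrite ltcE /= => /andP[/eqP rim rre].
pose d := Num.min (Num.min d1 d2) (complex.Re r).
have dp : 0 < d by rewrite /d !lt_min d1p d2p rre.
have hdd t : `|t| < d -> [/\ `|t| < d1, `|t| < d2 & `|t| < complex.Re r].
  by rewrite /d !lt_min => /andP[/andP[-> ->] ->].
have hd t : `|t| < d -> t ^+ 2 * MA <= 1 / 16 by case/hdd => /hd1.
have hd0 t : `|t| < d -> t ^+ 2 * MA0 <= 1 / 16 by case/hdd => _ /hd2.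
have hrr t : `|t| < d -> `|t%:C| < r.
  case/hdd => _ _ h; rewrite normC_real ltcE /= rim eqxx /=; exact: h.
have P00 : Peq A B A0 B0 d 0 0.
  move=> u v s t hs ht; rewrite /Psi /=.
  rewrite -(gram_repr hA hB MAp hMA hd u v hs ht) -(gram_repr hA0 hB0 MA0p hMA0 hd0 u v hs ht).
  have := hr (t%:C) (s%:C) (hrr t ht) (hrr s hs) u.
  have -> : ((s%:C)^*)%C = s%:C by apply/eqP; rewrite eq_complex /= oppr0 !eqxx.
  by move=> ->.
have hall := all_Peq hA MAp hMA hd hA0 MA0p hMA0 hd0 dp P00.
have gram j k u v : pip (iter j A (B v)) (iter k A (B u)) = pip (iter j A0 (B0 v)) (iter k A0 (B0 u)).
  have := hall j k u v 0 0 (abs0d dp) (abs0d dp); rewrite /Psi.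
  by rewrite !(G0 d hA MAp hMA) !(G0 d hA0 MA0p hMA0).
split; first exact: hadm.
move=> X' A' B' C' hadm'' n u.
have -> : energy (ctrl_sum A B n u) = energy (ctrl_sum A0 B0 n u).
  rewrite !energy_sum; apply: eq_bigr => k _; apply: eq_bigr => j _; exact: gram.
exact: hopt.2 _ _ _ _ hadm'' n u.
Qed.
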